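(* Let $K$ be a field, let $R$ be a $K$-algebra and let $A$ be a right double Ore extension of $R$ with generating variables $x_1,x_2$, relation $$x_2x_1=p_{12}x_1x_2+p_{11}x_1^2+\tau_1x_1+\tau_2x_2+\tau_0\qquad(p_{12},p_{11}\in K,\ \tau_0,\tau_1,\tau_2\in R),$$ and associated maps $\sigma=(\sigma_{ij})\colon R\to M_2(R)$ and $\delta=(\delta_1,\delta_2)^T\colon R\to R^{\oplus 2}$. Suppose that $p_{11}=0$, $p_{12}\neq 0$, $\sigma_{12}=\sigma_{21}=0$ (i.e. $\sigma=\left(\begin{smallmatrix}\sigma_{11}&0\\0&\sigma_{22}\end{smallmatrix}\right)$), and $\sigma_{11}(r)\neq 0$, $\sigma_{22}(r)\neq 0$ for all $r\in R\setminus\{0\}$. Then $A$ is a skew PBW extension of $R$ (in the variables $x_1,x_2$).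
   Context: All algebras are over a field $K$. A $K$-algebra $B$ containing $R$ as a subring is a right double Ore extension of $R$ if: (1) $B$ is generated by $R$ and two elements $x_1,x_2$; (2) $x_2x_1=p_{12}x_1x_2+p_{11}x_1^2+\tau_1x_1+\tau_2x_2+\tau_0$ with $p_{12},p_{11}\in K$, $\tau_0,\tau_1,\tau_2\in R$; (3) $B$ is a free left $R$-module with basis $\{x_1^{a}x_2^{b}: a,b\ge 0\}$; (4) $x_1R+x_2R\subseteq Rx_1+Rx_2+R$. By (3),(4) there are uniquely determined $K$-linear maps $\sigma_{ij},\delta_i\colon R\to R$ with $x_ir=\sigma_{i1}(r)x_1+\sigma_{i2}(r)x_2+\delta_i(r)$ for $i=1,2$, $r\in R$; one writes $\sigma=(\sigma_{ij})\colon R\to M_2(R)$, $\delta=(\delta_1,\delta_2)^T$, $P=\{p_{12},p_{11}\}$. A ring $A$ is a skew PBW extension of a ring $R$ in $x_1,\dots,x_n$ if: (i) $R\subseteq A$; (ii) $A$ is a free left $R$-module with basis the standard monomials $x_1^{\alpha_1}\cdots x_n^{\alpha_n}$, $\alpha\in\mathbb N^n$ (with $x_1^0\cdots x_n^0=1$); (iii) for each $i$ and each $r\in R\setminus\{0\}$ there is $c_{i,r}\in R\setminus\{0\}$ with $x_ir-c_{i,r}x_i\in R$; (iv) for all $i,j$ there is $c_{i,j}\in R\setminus\{0\}$ with $x_jx_i-c_{i,j}x_ix_j\in R+Rx_1+\cdots+Rx_n$. *)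

(* Defs.v *)
From HB Require Import structures.
From mathcomp Require Import all_boot all_order all_algebra.
Set Implicit Arguments. Unset Strict Implicit. Unset Printing Implicit Defensive.
Import GRing.Theory.
Local Open Scope ring_scope.

Section Defs.
Variables (K : fieldType) (B : algType K).

Definition is_subalgebra (R : B -> Prop) : Prop :=
  [/\ R 1,
      forall a b, R a -> R b -> R (a - b),
      forall a b, R a -> R b -> R (a * b)
    & forall (k : K) a, R a -> R (k *: a)].

Definition generated_by (R : B -> Prop) (x1 x2 : B) : Prop :=
  forall S : B -> Prop, is_subalgebra S -> (forall r, R r -> S r) ->
    S x1 -> S x2 -> forall b, S b.

Definition left_free_basis2 (R : B -> Prop) (x1 x2 : B) : Prop :=
  (forall b : B, exists (N : nat) (c : nat -> nat -> B),
      (forall i j, R (c i j)) /\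
      b = \sum_(i < N) \sum_(j < N) c i j * (x1 ^+ i * x2 ^+ j)) /\
  (forall (N : nat) (c : nat -> nat -> B),
      (forall i j, R (c i j)) ->
      \sum_(i < N) \sum_(j < N) c i j * (x1 ^+ i * x2 ^+ j) = 0 ->
      forall i j, (i < N)%N -> (j < N)%N -> c i j = 0).

Definition right_double_Ore (R : B -> Prop) (x1 x2 : B) (p12 p11 : K)
    (tau0 tau1 tau2 : B) : Prop :=
  [/\ is_subalgebra R,
      generated_by R x1 x2,
      [/\ R tau0, R tau1, R tau2 &
          x2 * x1 = p12 *: (x1 * x2) + p11 *: (x1 * x1)
                    + tau1 * x1 + tau2 * x2 + tau0],
      left_free_basis2 R x1 x2
    & forall r, R r -> forall x, (x = x1 \/ x = x2) ->
        exists a b c, [/\ R a, R b, R c & x * r = a * x1 + b * x2 + c]].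

Definition std_monomial (n : nat) (x : 'I_n -> B) (alpha : 'I_n -> nat) : B :=
  \prod_(i < n) x i ^+ alpha i.

Definition left_free_std_monomials (R : B -> Prop) (n : nat) (x : 'I_n -> B)
  : Prop :=
  (forall b : B, exists (N : nat) (c : {ffun 'I_n -> 'I_N} -> B),
      (forall a, R (c a)) /\
      b = \sum_(a : {ffun 'I_n -> 'I_N}) c a * std_monomial x (fun i => a i)) /\
  (forall (N : nat) (c : {ffun 'I_n -> 'I_N} -> B),
      (forall a, R (c a)) ->
      \sum_(a : {ffun 'I_n -> 'I_N}) c a * std_monomial x (fun i => a i) = 0 ->
      forall a, c a = 0).

Definition skew_PBW (R : B -> Prop) (n : nat) (x : 'I_n -> B) : Prop :=
  [/\ left_free_std_monomials R x,
      (forall (i : 'I_n) r, R r -> r <> 0 ->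
          exists c, [/\ R c, c <> 0 & R (x i * r - c * x i)])
    & (forall i j : 'I_n, exists c, [/\ R c, c <> 0 &
          exists (r0 : B) (r : 'I_n -> B), [/\ R r0, (forall k, R (r k)) &
            x j * x i - c * x i * x j = r0 + \sum_(k < n) r k * x k]])].

Definition vars2 (x1 x2 : B) : 'I_2 -> B :=
  fun i => if val i == 0%N then x1 else x2.

End Defs.

(* Main.v *)
Require Import Defs.
From HB Require Import structures.
From mathcomp Require Import all_boot all_order all_algebra.
Import GRing.Theory.
Local Open Scope ring_scope.
Set Implicit Arguments. Unset Strict Implicit.

Section Aux.
Variables (K : fieldType) (B : algType K).

Definition fpair (N : nat) (p : 'I_N * 'I_N) : {ffun 'I_2 -> 'I_N} :=
  [ffun k : 'I_2 => if val k == 0%N then p.1 else p.2].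
Definition gpair (N : nat) (a : {ffun 'I_2 -> 'I_N}) : 'I_N * 'I_N :=
  (a ord0, a (Ordinal (isT : (1 < 2)%N))).

Lemma fg N a : fpair (gpair a) = a :> {ffun 'I_2 -> 'I_N}.
Proof.
apply/ffunP => k; rewrite ffunE /=.
case: k => [[|[|k]] Hk] //=; by congr (a _); apply: val_inj.
Qed.

Lemma gf N p : gpair (fpair p) = p :> 'I_N * 'I_N.
Proof. by case: p => i j; rewrite /gpair !ffunE. Qed.

Lemma sum_ffun2 N (F : {ffun 'I_2 -> 'I_N} -> B) :
  \sum_a F a = \sum_(i < N) \sum_(j < N) F (fpair (i, j)).
Proof.
rewrite pair_big /= (reindex (@fpair N)) /=.
  by apply: eq_bigr => -[i j].
by exists (@gpair N) => x _; [rewrite gf | rewrite fg].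
Qed.

Lemma mono2 (x1 x2 : B) N (i j : 'I_N) :
  std_monomial (vars2 x1 x2) (fun k => fpair (i, j) k) = x1 ^+ i * x2 ^+ j.
Proof.
by rewrite /std_monomial big_ord_recl big_ord_recl big_ord0 mulr1 /= !ffunE /=.
Qed.

Variable R : B -> Prop.
Hypothesis HR : is_subalgebra R.

Lemma R1 : R 1. Proof. by case: HR. Qed.
Lemma RB a b : R a -> R b -> R (a - b). Proof. by case: HR => _ H _ _; apply: H. Qed.
Lemma R0 : R 0. Proof. by rewrite -(subrr 1); apply: RB; apply: R1. Qed.
Lemma RN a : R a -> R (- a). Proof. by move=> Ha; rewrite -sub0r; apply: RB => //; apply: R0. Qed.
Lemma RZ k a : R a -> R (k *: a). Proof. by case: HR => _ _ _ H; apply: H. Qed.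

End Aux.

Lemma zhelp (V : zmodType) (X a b c : V) : X - (X + a + b + c) = - c + (- a + - b).
Proof. by rewrite !opprD !addrA subrr add0r [LHS]addrC addrA. Qed.


Theorem theorem3p1 (K : fieldType) (B : algType K) (R : B -> Prop)
    (x1 x2 : B) (p12 p11 : K) (tau0 tau1 tau2 : B)
    (s11 s12 s21 s22 d1 d2 : B -> B) :
  right_double_Ore R x1 x2 p12 p11 tau0 tau1 tau2 ->
  (* sigma, delta: the maps determined by x_i r = s_i1(r) x1 + s_i2(r) x2 + d_i(r) *)
  (forall r, R r -> (R (s11 r) /\ R (s12 r) /\ R (s21 r) /\ R (s22 r) /\
                        R (d1 r) /\ R (d2 r))) ->
  (forall r, R r -> x1 * r = s11 r * x1 + s12 r * x2 + d1 r /\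
                    x2 * r = s21 r * x1 + s22 r * x2 + d2 r) ->
  p11 = 0 -> p12 != 0 ->
  (forall r, R r -> s12 r = 0 /\ s21 r = 0) ->
  (forall r, R r -> r <> 0 -> s11 r <> 0 /\ s22 r <> 0) ->
  skew_PBW R (vars2 x1 x2).
Proof.
move=> [HR _ [Rt0 Rt1 Rt2 Hrel] [Hgen Hfree] _] Hs Hx Hp11 Hp12 H0 Hnz.
split.
- split.
  + move=> b; have [N [c [Rc ->]]] := Hgen b.
    exists N, (fun a : {ffun 'I_2 -> 'I_N} => c (a ord0) (a (Ordinal (isT : (1 < 2)%N)))); split.
      by move=> a; apply: Rc.
    rewrite sum_ffun2; apply: eq_bigr => i _; apply: eq_bigr => j _.
    by rewrite mono2 !ffunE.
  + move=> N c' Rc' Hsum a.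
    case: N c' Rc' Hsum a => [|M] c' Rc' Hsum a.
      by case: (a ord0).
    pose c i j := if (i < M.+1)%N && (j < M.+1)%N then
                    c' (fpair (inord i, inord j)) else 0.
    have Rc : forall i j, R (c i j).
      by move=> i j; rewrite /c; case: ifP => _; [apply: Rc' | apply: R0].
    have Hs0 : \sum_(i < M.+1) \sum_(j < M.+1) c i j * (x1 ^+ i * x2 ^+ j) = 0.
      rewrite sum_ffun2 in Hsum; rewrite -[RHS]Hsum; apply: eq_bigr => i _; apply: eq_bigr => j _.
      by rewrite mono2 /c !ltn_ord /= !inord_val.
    have := Hfree _ c Rc Hs0 (a ord0) (a (Ordinal (isT : (1 < 2)%N))) (ltn_ord _) (ltn_ord _).
    rewrite /c !ltn_ord /= !inord_val.
    by have := fg a; rewrite /gpair => ->.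
- move=> i r Rr rn0.
  have [Rs11 [Rs12 [Rs21 [Rs22 [Rd1 Rd2]]]]] := Hs r Rr.
  have [e1 e2] := Hx r Rr; have [z12 z21] := H0 r Rr.
  have [n1 n2] := Hnz r Rr rn0.
  rewrite /vars2; case: (val i == 0%N).
  + exists (s11 r); split => //.
    by rewrite e1 z12 mul0r addr0 addrC addKr.
  + exists (s22 r); split => //.
    by rewrite e2 z21 mul0r add0r addrC addKr.
- have RA k : R (k%:A) by apply: RZ => //; apply: R1.
  have A0 : forall k : K, k != 0 -> k%:A <> 0 :> B.
    move=> k kn0 /eqP; rewrite scaler_eq0 (negbTE kn0) /= oner_eq0 //.
  move=> i j.
  have sum2 : forall r : 'I_2 -> B, \sum_(k < 2) r k * vars2 x1 x2 k
      = r ord0 * x1 + r (Ordinal (isT : (1 < 2)%N)) * x2.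
    move=> r; rewrite big_ord_recl big_ord_recl big_ord0 addr0 /=.
    by congr (_ + r _ * _); apply: val_inj.
  case: i => [[|[|i]] Hi] //; case: j => [[|[|j]] Hj] //.
  + exists 1; split => //; first exact: R1.
      by apply/eqP; exact: oner_neq0.
    exists 0, (fun _ => 0); split => //; first exact: R0.
      by move=> _; apply: R0.
    by rewrite sum2 !mul0r mul1r subrr !addr0.
  +
    exists p12%:A; split => //; first by apply: A0.
    exists tau0, (fun k => if val k == 0%N then tau1 else tau2); split => //.
      by move=> k; case: (val k == 0%N).
    rewrite sum2 /vars2 /= Hrel Hp11 scale0r addr0 mulr_algl -scalerAl.
    by rewrite [_ - _]addrC !addrA addNr add0r [LHS]addrC addrA.
  + exists p12^-1%:A; split => //; first by apply: A0; rewrite invr_eq0.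
    exists (- (p12^-1 *: tau0)),
      (fun k => if val k == 0%N then - (p12^-1 *: tau1) else - (p12^-1 *: tau2)).
    split.
      by apply: RN => //; apply: RZ.
      by move=> k; case: (val k == 0%N); apply: RN => //; apply: RZ.
    rewrite sum2 /vars2 /= mulr_algl -scalerAl Hrel Hp11 scale0r addr0.
    rewrite !scalerDr scalerA mulVf // scale1r !mulNr -!scalerAl.
    exact: zhelp.
  + exists 1; split => //; first exact: R1.
      by apply/eqP; exact: oner_neq0.
    exists 0, (fun _ => 0); split => //; first exact: R0.
      by move=> _; apply: R0.
    by rewrite sum2 !mul0r mul1r subrr !addr0.
Qed.
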